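(* Let $p$ be a prime and let $\mathcal{A}$ be an $S$-ring over a cyclic $p$-group $G$ with $\mathrm{rad}(\mathcal{A})>e$. Then there exists an $\mathcal{A}$-section $U/L$ such that $\mathcal{A}$ is the proper $U/L$-wreath product and $\mathrm{rad}(\mathcal{A}_U)=e$.
   Context: Let $G$ be a finite group with identity $e$; for $X\subseteq G$ write $\underline{X}=\sum_{x\in X}x\in\mathbb{Z}G$. An $S$-ring over $G$ is a subring $\mathcal{A}\subseteq\mathbb{Z}G$ for which there is a partition $\mathcal{S}(\mathcal{A})$ of $G$ (the basic sets) with $\{e\}\in\mathcal{S}(\mathcal{A})$, $X^{-1}\in\mathcal{S}(\mathcal{A})$ whenever $X\in\mathcal{S}(\mathcal{A})$, and $\mathcal{A}=\mathrm{Span}_{\mathbb{Z}}\{\underline{X}:X\in\mathcal{S}(\mathcal{A})\}$. $X\subseteq G$ is an $\mathcal{A}$-set if $\underline X\in\mathcal{A}$; an $\mathcal{A}$-subgroup is a subgroup that is an $\mathcal{A}$-set; an $\mathcal{A}$-section is $U/L$ with $L\trianglelefteq U\leq G$ both $\mathcal{A}$-subgroups; $\mathcal{A}_U=\mathrm{Span}_{\mathbb{Z}}\{\underline X:X\in\mathcal{S}(\mathcal{A}),X\subseteq U\}$ is an $S$-ring over $U$. For $X\subseteq G$, $\mathrm{rad}(X)=\{g\in G:Xg=gX=X\}$. For an $S$-ring $\mathcal{B}$ over a cyclic group $H$, $\mathrm{rad}(\mathcal{B})=\mathrm{rad}(X)$ where $X$ is any basic set of $\mathcal{B}$ containing a generator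 of $H$ (this does not depend on the choice of $X$). $\mathcal{A}$ is the $U/L$-wreath product if $L\trianglelefteq G$ and $L\leq\mathrm{rad}(X)$ for every basic set $X\not\subseteq U$; it is proper if $L\neq\{e\}$ and $U\neq G$. *)

(* Defs.v *)
From mathcomp Require Import all_boot all_fingroup all_solvable.
Set Implicit Arguments. Unset Strict Implicit. Unset Printing Implicit Defensive.
Local Open Scope group_scope.

Section SRing.
Variable gT : finGroupType.

(* An S-ring over G, given by its family S of basic sets:
   S partitions G, {e} is basic, S is closed under inversion, and the
   Z-span of the basic quantities is closed under multiplication, i.e. for
   basic X, Y the coefficient of z in X*Y (in ZG) is constant on every basic set. *)
Definition is_sring (G : {group gT}) (S : {set {set gT}}) : Prop :=
  [/\ partition S G,
      [set 1] \in S,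
      (forall X, X \in S -> X^-1 \in S) &
      (forall X Y Z, X \in S -> Y \in S -> Z \in S ->
         forall z1 z2, z1 \in Z -> z2 \in Z ->
           #|[set u in setX X Y | u.1 * u.2 == z1]|
           = #|[set u in setX X Y | u.1 * u.2 == z2]|)].

(* X is an A-set: X is a subset of G which is a union of basic sets
   (equivalently its indicator element lies in A). *)
Definition is_aset (G : {group gT}) (S : {set {set gT}}) (X : {set gT}) : bool :=
  (X \subset G) && [forall Y in S, (Y :&: X != set0) ==> (Y \subset X)].

Definition is_asubgroup (G : {group gT}) (S : {set {set gT}}) (H : {group gT}) : bool :=
  (H \subset G) && is_aset G S H.

Definition restr_sring (S : {set {set gT}}) (U : {set gT}) : {set {set gT}} :=
  [set X in S | X \subset U].

Definition rad (G : {set gT}) (X : {set gT}) : {set gT} :=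
  [set g in G | (X :* g == X) && (g *: X == X)].

(* rad of an S-ring over a cyclic group G: rad of the basic set containing
   a (chosen) generator of G; independent of the choice by the paper. *)
Definition sring_rad (G : {group gT}) (S : {set {set gT}}) : {set gT} :=
  let g := odflt 1 [pick x in G | generator G x] in
  rad G (pblock S g).

Definition is_wreath (G : {group gT}) (S : {set {set gT}}) (U L : {group gT}) : bool :=
  (L <| G) && [forall X in S, ~~ (X \subset U) ==> (L \subset rad G X)].

Definition is_proper_wreath (G : {group gT}) (S : {set {set gT}}) (U L : {group gT}) : bool :=
  [&& is_wreath G S U L, L != 1 :> {set gT} & U != G :> {set gT}].

Definition is_asection (G : {group gT}) (S : {set {set gT}}) (U L : {group gT}) : bool :=
  [&& is_asubgroup G S U, is_asubgroup G S L & L <| U].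

End SRing.

(* Main.v *)
Require Import Defs.
From mathcomp Require Import all_boot all_fingroup all_solvable.
Set Implicit Arguments. Unset Strict Implicit. Unset Printing Implicit Defensive.
Local Open Scope group_scope.
Section T.
Variable gT : finGroupType.
Definition Tup k (X : {set gT}) (z : gT) := [set t : k.-tuple gT | all (mem X) t & \prod_(x <- t) x == z].

Lemma Tup_rec k X (z : gT) : #|Tup k.+1 X z| = \sum_(y in X) #|Tup k X (y^-1 * z)|.
Proof.
rewrite -sum1_card.
rewrite (reindex (fun u : gT * k.-tuple gT => [tuple of u.1 :: u.2])) /=; last first.
  exists (fun t : k.+1.-tuple gT => (thead t, [tuple of behead t])).
    by move=> [y t'] _ /=; rewrite theadE; congr (_, _); apply: val_inj.
  by move=> t _; rewrite [t in RHS]tuple_eta.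
rewrite (eq_bigr (fun y => \sum_(t in Tup k X (y^-1 * z)) 1)); last by move=> y _; rewrite sum1_card.
rewrite pair_big_dep; apply: eq_bigl => -[y t] /=.
rewrite !inE /= big_cons; case: (y \in X) => //=; case: (all _ _) => //=.
by apply/eqP/eqP => [<-|->]; rewrite ?mulKg ?mulKVg.
Qed.

Lemma rcons_const (T : Type) (s : seq T) x : rcons s x = x :: s -> s = nseq (size s) x.
Proof.
elim: s => [|y s IH] //= [-> E]; congr (_ :: _); exact: IH.
Qed.

Lemma rcons_nseq' (T : Type) n (x : T) : rcons (nseq n x) x = nseq n.+1 x.
Proof. by elim: n => //= n ->. Qed.

Lemma prod_nseq n (x : gT) : \prod_(y <- nseq n x) y = x ^+ n.
Proof. by elim: n => [|n IH]; rewrite ?big_nil // big_cons IH expgS. Qed.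

Lemma prod_rot1 (G : {group gT}) (s : seq gT) : abelian G -> all (mem G) s ->
  \prod_(y <- seq.rot 1 s) y = \prod_(y <- s) y.
Proof.
move=> abG; case: s => [|x s] //= /andP [xG sG].
rewrite rot1_cons big_rcons big_cons /=.
have pG : \prod_(y <- s) y \in G.
  by rewrite big_seq; apply: group_prod => y ys; exact: (allP sG).
by apply: (centsP abG) => //.
Qed.

Definition trot n (t : n.-tuple gT) : n.-tuple gT := [tuple of seq.rot 1 t].
Lemma trot_inj n : injective (@trot n).
Proof. by move=> t1 t2 /(congr1 val) /= /rot_inj /val_inj. Qed.

Lemma iter_trot n (t : n.-tuple gT) k : k <= n -> val (iter k (@trot n) t) = seq.rot k t.
Proof.
elim: k => [|k IH] lt; first by rewrite rot0.
by rewrite iterS /= IH ?(ltnW lt) // (rotS (s := t)) // size_tuple.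
Qed.

Lemma all_rot1 (T : Type) (a : pred T) s : all a (seq.rot 1 s) = all a s.
Proof. by case: s => // x s; rewrite rot1_cons all_rcons /= andbC. Qed.

Lemma Tup_mod (G : {group gT}) q (X : {set gT}) (z : gT) : prime q -> abelian G -> X \subset G ->
  #|Tup q X z| = #|[set x in X | x ^+ q == z]| %[mod q].
Proof.
move=> pq; have := prime_gt0 pq; case: q pq => // n pq _ abG XG.
set r := perm (@trot_inj n.+1).
have rq : r ^+ n.+1 = 1.
  apply/permP => t; rewrite permX perm1 (eq_iter (permE _)); apply: val_inj.
  by rewrite iter_trot // rot_oversize // size_tuple.
have qgr : n.+1.-group <[r]>.
  rewrite /pgroup -orderE; apply: pnat_dvd (pnat_id pq); by rewrite order_dvdn rq.
have acts : [acts <[r]>, on Tup n.+1 X z | 'P].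
  rewrite cycle_subG; apply/astabsP => t; rewrite /= apermE /r permE /Tup !inE /= all_rot1.
  case At: (all (mem X) t) => //=; rewrite (prod_rot1 abG) //.
  by apply/allP => x xt; apply: (subsetP XG); apply: (allP At).
rewrite (pgroup_fix_mod qgr acts) afix_cycle; congr (_ %% _).
rewrite -[RHS](card_in_imset (f := fun x => [tuple of nseq n.+1 x])); last first.
  by move=> x y _ _ /(congr1 val) [].
apply: eq_card => t; rewrite [in LHS]inE; apply/andP/imsetP.
  case=> tT tF; have : val (trot t) = val t.
    by move/afix1P: tF; rewrite /= apermE /r permE => E; exact: (congr1 val E).
  move=> /= Ht; have Et : val t = thead t :: behead t by rewrite {1}(tuple_eta t).
  move: Ht; rewrite Et rot1_cons => H; have := rcons_const H; rewrite size_behead size_tuple /= => Eb.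
  exists (thead t).
    move: tT; rewrite !inE Et Eb /= => /andP [/andP [-> _]].
    by rewrite big_cons prod_nseq -expgS.
  by apply: val_inj; rewrite /= Et Eb.
case=> x; rewrite inE => /andP [xX /eqP xz] ->; split.
  rewrite inE /= xX big_cons prod_nseq -expgS xz eqxx andbT; by apply/allP => y /nseqP [-> _].
apply/afix1P; rewrite /= apermE /r permE; apply: val_inj.
by rewrite /= rot1_cons rcons_nseq'.
Qed.
End T.
Section Basics.
Variables (gT : finGroupType) (G : {group gT}) (S : {set {set gT}}).
Hypothesis sS : is_sring G S.
Implicit Types X Y Z A B : {set gT}.

Lemma sS_part : partition S G. Proof. by case: sS. Qed.
Lemma sS_triv : trivIset S. Proof. by case/and3P: sS_part. Qed.
Lemma sS_cover : cover S = G. Proof. by case/and3P: sS_part => /eqP. Qed.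
Lemma sS_1 : [set 1] \in S. Proof. by case: sS. Qed.
Lemma sS_inv X : X \in S -> X^-1 \in S. Proof. by case: sS => _ _ H _; apply: H. Qed.
Lemma sS_ax X Y Z : X \in S -> Y \in S -> Z \in S ->
  forall z1 z2, z1 \in Z -> z2 \in Z ->
  #|[set u in setX X Y | u.1 * u.2 == z1]| = #|[set u in setX X Y | u.1 * u.2 == z2]|.
Proof. by case: sS => _ _ _ H; apply: H. Qed.

Lemma basic_sub X : X \in S -> X \subset G.
Proof. by move=> XS; rewrite -sS_cover; apply: bigcup_sup. Qed.

Lemma pblockS x : x \in G -> pblock S x \in S.
Proof. by move=> xG; apply: pblock_mem; rewrite sS_cover. Qed.

Lemma mem_pblockS x : x \in G -> x \in pblock S x.
Proof. by move=> xG; rewrite mem_pblock sS_cover. Qed.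

Lemma pblock_eq X x : X \in S -> x \in X -> pblock S x = X.
Proof. by move=> XS xX; apply: def_pblock sS_triv XS xX. Qed.

Lemma basic1 Z : Z \in S -> 1 \in Z -> Z = [set 1].
Proof.
move=> ZS Z1; rewrite -(pblock_eq ZS Z1); apply: pblock_eq sS_1 _; exact: set11.
Qed.

Lemma asetP X : reflect (X \subset G /\ forall Y, Y \in S -> forall y, y \in Y -> y \in X -> Y \subset X)
  (is_aset G S X).
Proof.
apply: (iffP andP) => [[XG /forall_inP H]|[XG H]]; split => //.
  move=> Y YS y yY yX; apply: (implyP (H Y YS)); apply/set0Pn; exists y; exact/setIP.
apply/forall_inP => Y YS; apply/implyP => /set0Pn [y /setIP [yY yX]]; exact: H YS y yY yX.
Qed.

Lemma aset_pblock X x : is_aset G S X -> x \in X -> pblock S x \subset X.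
Proof.
move=> /asetP [XG H] xX; have xG : x \in G := subsetP XG x xX.
exact: H (pblockS xG) x (mem_pblockS xG) xX.
Qed.

Lemma aset1 : is_aset G S [set 1].
Proof.
apply/asetP; split; first by rewrite sub1set group1.
by move=> Y YS y yY /set1P ey; rewrite ey in yY; rewrite (basic1 YS yY).
Qed.

Lemma asetI X Y : is_aset G S X -> is_aset G S Y -> is_aset G S (X :&: Y).
Proof.
move=> /asetP [XG HX] /asetP [YG HY]; apply/asetP; split.
  by rewrite subIset ?XG.
move=> Z ZS z zZ /setIP [zX zY]; rewrite subsetI (HX Z ZS z) ?(HY Z ZS z) //.
Qed.

Lemma aset_basic X : X \in S -> is_aset G S X.
Proof.
move=> XS; apply/asetP; split; first exact: basic_sub.
by move=> Y YS y yY yX; rewrite -(pblock_eq YS yY) (pblock_eq XS yX).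
Qed.

Lemma asetM A B : is_aset G S A -> is_aset G S B -> is_aset G S (A * B).
Proof.
move=> aA aB; have /asetP [AG _] := aA; have /asetP [BG _] := aB.
apply/asetP; split; first exact: mul_subG.
move=> Y YS z zY /mulsgP [a b aA' bB' Ez]; subst z; apply/subsetP => y yY.
have aG := subsetP AG a aA'; have bG := subsetP BG b bB'.
have := sS_ax (pblockS aG) (pblockS bG) YS zY yY.
have : (a, b) \in [set u in setX (pblock S a) (pblock S b) | u.1 * u.2 == a * b].
  by rewrite inE /= eqxx andbT; apply/setXP; split; apply: mem_pblockS.
move=> abin E.
have : 0 < #|[set u in setX (pblock S a) (pblock S b) | u.1 * u.2 == y]|.
  by rewrite -E; apply/card_gt0P; exists (a, b).
case/card_gt0P => [[u1 u2]]; rewrite inE /= => /andP [/setXP [u1X u2X] /eqP <-].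
apply/mulsgP; exists u1 u2 => //.
  exact: subsetP (aset_pblock aA aA') _ u1X.
exact: subsetP (aset_pblock aB bB') _ u2X.
Qed.


Section Gen.
Variable T : {set gT}.
Hypotheses (aT : is_aset G S T) (T1 : 1 \in T).
Let V k := iter k (fun A => A * T) 1.

Lemma V_sub k : V k \subset V k.+1.
Proof. by rewrite /V iterS; apply: mulg_subl. Qed.

Lemma V_mono j k : j <= k -> V j \subset V k.
Proof.
move=> /subnKC <-; elim: (k - j) => [|n IH]; first by rewrite addn0.
by rewrite addnS; apply: subset_trans IH (V_sub _).
Qed.

Lemma V_aset k : is_aset G S (V k).
Proof. elim: k => [|k IH]; first exact: aset1. by rewrite /V iterS; apply: asetM. Qed.

Lemma V_stab k : V k = V k.+1 \/ k < #|V k|.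
Proof.
elim: k => [|k IH]; first by right; rewrite /V /= cards1.
case: (boolP (V k == V k.+1)) => [/eqP E|ne].
  by left; change (V k * T = V k.+1 * T); rewrite E.
case: IH => [E|lt]; first by rewrite E eqxx in ne.
right; apply: leq_trans (proper_card _); first exact: lt.
by rewrite properEneq ne V_sub.
Qed.

Lemma V_gen : exists k, V k = <<T>>.
Proof.
have /asetP [TG _] := aT.
have VG k : V k \subset G.
  by have /asetP [] := V_aset k.
set N := #|G|.
have EN : V N = V N.+1.
  case: (V_stab N) => // lt; have := subset_leq_card (VG N).
  by rewrite leqNgt lt.
have VT : V N * T = V N by symmetry; exact: EN.
have V1 : 1 \in V N by apply: subsetP (V_mono (leq0n N)) _ (set11 _).
have VVk k : V N * V k \subset V N.
  elim: k => [|k IH]; first by rewrite /= mulg1.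
  change (V N * (V k * T) \subset V N); rewrite mulgA -{2}VT; exact: mulSg IH.
have gV : group_set (V N) by rewrite /group_set V1 VVk.
exists N; apply/eqP; rewrite eqEsubset; apply/andP; split.
  elim: N {EN VT V1 VVk gV} => [|k IH]; first by rewrite /= sub1G.
  by rewrite /V iterS -/(V k) mul_subG // sub_gen.
have -> : V N = Group gV by [].
rewrite gen_subG /=; apply/subsetP => t tT.
by rewrite -VT; apply/mulsgP; exists 1 t; rewrite ?mul1g.
Qed.

Lemma aset_gen : is_aset G S <<T>>.
Proof. by case: V_gen => k <-; apply: V_aset. Qed.

End Gen.

Hypothesis abG : abelian G.

Lemma commG x y : x \in G -> y \in G -> commute x y.
Proof. move=> xG yG; exact: (centsP abG) x xG y yG. Qed.

Lemma lrcoset X h : X \subset G -> h \in G -> h *: X = X :* h.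
Proof.
move=> XG hG; apply/setP => y; rewrite mem_lcoset mem_rcoset.
case yG: (y \in G); first by rewrite (commG (groupVr hG) yG).
apply/idP/idP => /(subsetP XG) H.
  by rewrite (groupMl _ (groupVr hG)) yG in H.
by rewrite (groupMr _ (groupVr hG)) yG in H.
Qed.

Lemma rad_group X : X \subset G -> group_set (rad G X).
Proof.
move=> XG; apply/group_setP; split.
  by rewrite inE group1 rcoset1 lcoset1 !eqxx.
move=> a b; rewrite !inE => /and3P [aG /eqP Ea _] /and3P [bG /eqP Eb _].
have abG' : a * b \in G by rewrite groupM.
by rewrite abG' (lrcoset XG abG') rcosetM Ea Eb eqxx.
Qed.

Lemma rad_char X h : X \subset G -> h \in G ->
  (h \in rad G X) = (#|[set x in X | x * h \in X]| == #|X|).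
Proof.
move=> XG hG; rewrite inE hG (lrcoset XG hG) andbb /=.
have sub : [set x in X | x * h \in X] \subset X by apply/subsetP => x; rewrite inE => /andP [].
apply/eqP/eqP => [E|E].
  rewrite (_ : [set x in X | x * h \in X] = X) //; apply/setP => x; rewrite inE; case xX: (x \in X) => //=.
  by rewrite -E mem_rcoset mulgK xX.
have E' : [set x in X | x * h \in X] = X.
  by apply/eqP; rewrite eqEcard sub E leqnn.
apply/eqP; rewrite eqEcard card_rcoset leqnn andbT; apply/subsetP => y.
rewrite mem_rcoset => yX; rewrite -E' inE in yX; case/andP: yX => _.
by rewrite mulgKV.
Qed.

Lemma rad_count X h : X \subset G ->
  #|[set x in X | x * h \in X]| = #|[set u in setX X^-1 X | u.1 * u.2 == h]|.
Proof.
move=> XG.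
rewrite -(card_in_imset (f := fun x => (x^-1, x * h))); last first.
  by move=> x y _ _ [/invg_inj].
apply: eq_card => -[a b]; rewrite [in RHS]inE /=; apply/imsetP/andP.
  case=> x; rewrite inE => /andP [xX xhX] [-> ->]; split.
    by apply/setXP; rewrite inE invgK.
  by rewrite mulKg.
case=> /setXP [aX bX] /eqP E; exists a^-1; last by rewrite invgK -E mulKg.
by rewrite inE -E mulKg bX andbT; move: aX; rewrite inE.
Qed.

Lemma rad_aset X : X \in S -> is_aset G S (rad G X).
Proof.
move=> XS; have XG := basic_sub XS.
apply/asetP; split; first by apply/subsetP => h; rewrite inE => /andP [].
move=> Y YS y1 y1Y y1R; apply/subsetP => y2 y2Y.
have YG := basic_sub YS.
rewrite rad_char // ?(subsetP YG) // rad_count //.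
rewrite -(sS_ax (sS_inv XS) XS YS y1Y y2Y) -rad_count // -rad_char //.
exact: (subsetP YG).
Qed.


Definition afun (f : gT -> nat) :=
  forall Z, Z \in S -> forall z1 z2, z1 \in Z -> z2 \in Z -> f z1 = f z2.

Lemma f_decomp f : afun f -> forall w, w \in G -> f w = \sum_(W in S) (w \in W) * f (repr W).
Proof.
move=> fA w wG; rewrite (bigD1 (pblock S w)) ?pblockS //= mem_pblockS // mul1n.
rewrite big1 ?addn0.
  exact: fA (pblockS wG) _ _ (mem_pblockS wG) (mem_repr _ (mem_pblockS wG)).
move=> W /andP [WS neW]; case wW: (w \in W) => //.
by rewrite (pblock_eq WS wW) eqxx in neW.
Qed.

Lemma sum_decomp f X z : afun f -> X \subset G -> z \in G ->
  \sum_(y in X) f (y^-1 * z)%g =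
  \sum_(W in S) #|[set u in setX X W | (u.1 * u.2)%g == z]| * f (repr W).
Proof.
move=> fA XG zG.
rewrite (eq_bigr (fun y => \sum_(W in S) ((y^-1 * z)%g \in W) * f (repr W))); last first.
  by move=> y yX; apply: f_decomp => //; rewrite groupM // groupV (subsetP XG).
rewrite exchange_big; apply: eq_bigr => W WS.
rewrite -big_distrl /=; congr (_ * _)%N.
transitivity #|[set y in X | y^-1 * z \in W]|.
  rewrite (eq_bigr (fun y => if (y^-1 * z)%g \in W then 1%N else 0%N)); last first.
    by move=> y _; case: (_ \in W).
  rewrite -big_mkcondr sum1_card; apply: eq_card => y; rewrite !inE.
  by [].
rewrite -(card_in_imset (f := fun y => (y, y^-1 * z))); last by move=> a b _ _ [].
apply: eq_card => -[a b]; rewrite [in RHS]inE /=; apply/imsetP/andP.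
  case=> y; rewrite inE => /andP [yX yW] [-> ->]; split.
    by apply/setXP.
  by rewrite mulKVg.
case=> /setXP [aX bW] /eqP E; exists a; last by rewrite -E mulKg.
by rewrite inE aX -E mulKg bW.
Qed.

Lemma afun_step f X : afun f -> X \in S -> afun (fun z => \sum_(y in X) f (y^-1 * z)%g).
Proof.
move=> fA XS Z ZS z1 z2 z1Z z2Z; have ZG := basic_sub ZS.
rewrite !sum_decomp ?basic_sub // ?(subsetP ZG) //; apply: eq_bigr => W WS.
by rewrite (sS_ax XS WS ZS z1Z z2Z).
Qed.


Lemma Tup_afun X k : X \in S -> afun (fun z => #|Tup k X z|).
Proof.
move=> XS; elim: k => [|k IH].
  have E z : #|Tup 0 X z| = (1 == z).
    have -> : Tup 0 X z = if 1 == z then setT else set0.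
      by apply/setP => t; rewrite inE (tuple0 t) /= big_nil; case: (1 == z); rewrite inE.
    by case: (1 == z); rewrite ?cardsT ?cards0 ?card_tuple.
  move=> Z ZS z1 z2 z1Z z2Z; rewrite !E.
  case: (boolP (1 == z1)) => [/eqP e1|n1]; case: (boolP (1 == z2)) => [/eqP e2|n2] //.
    by move: z2Z; rewrite (basic1 ZS); [rewrite inE eq_sym (negbTE n2) | rewrite e1].
  by move: z1Z; rewrite (basic1 ZS); [rewrite inE eq_sym (negbTE n1) | rewrite e2].
move=> Z ZS z1 z2 z1Z z2Z; rewrite !Tup_rec.
exact: (afun_step IH XS ZS z1Z z2Z).
Qed.


Lemma pow_inj m x y : coprime #|G| m -> x \in G -> y \in G -> x ^+ m = y ^+ m -> x = y.
Proof.
move=> cm xG yG E; by rewrite -(expgK cm xG) -(expgK cm yG) E.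
Qed.

Lemma card_pow m X : coprime #|G| m -> X \subset G -> #|[set x ^+ m | x in X]| = #|X|.
Proof.
move=> cm XG; apply: card_in_imset => x y xX yX.
exact: pow_inj cm (subsetP XG x xX) (subsetP XG y yX).
Qed.

Lemma powq_aset q X : prime q -> coprime #|G| q -> X \in S -> is_aset G S [set x ^+ q | x in X].
Proof.
move=> pq cq XS; have XG := basic_sub XS.
apply/asetP; split.
  by apply/subsetP => y /imsetP [x xX ->]; rewrite groupX // (subsetP XG).
move=> Y YS y1 y1Y /imsetP [x1 x1X Ey1]; apply/subsetP => y2 y2Y.
have E := Tup_afun q XS YS y1Y y2Y.
have M1 := Tup_mod y1 pq abG XG; have M2 := Tup_mod y2 pq abG XG.
have C1 : [set x in X | x ^+ q == y1] = [set x1].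
  apply/setP => x; rewrite !inE; apply/andP/eqP => [[xX /eqP e]|->].
    apply: (pow_inj cq); rewrite ?(subsetP XG) //; by rewrite e.
  by rewrite x1X Ey1.
apply/negPn/negP => ny2.
have C2 : [set x in X | x ^+ q == y2] = set0.
  apply/setP => x; rewrite !inE; apply/negP => /andP [xX /eqP e].
  by case/negP: ny2; apply/imsetP; exists x; rewrite ?e.
move: M1 M2; rewrite C1 C2 cards1 cards0 E => ->.
by rewrite modn_small ?prime_gt1 // mod0n.
Qed.

Lemma powq_aset_gen q T : prime q -> coprime #|G| q -> is_aset G S T ->
  is_aset G S [set x ^+ q | x in T].
Proof.
move=> pq cq aT; have /asetP [TG _] := aT.
apply/asetP; split.
  by apply/subsetP => y /imsetP [x xX ->]; rewrite groupX // (subsetP TG).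
move=> Y YS y1 y1Y /imsetP [t tT Ey1].
have tG := subsetP TG t tT.
have /asetP [_ H] := powq_aset pq cq (pblockS tG).
apply: subset_trans (H Y YS y1 y1Y _) _.
  by rewrite Ey1; apply/imsetP; exists t => //; exact: mem_pblockS.
apply: imsetS; exact: aset_pblock aT tT.
Qed.

Lemma powm_aset m T : 0 < m -> coprime #|G| m -> is_aset G S T ->
  is_aset G S [set x ^+ m | x in T].
Proof.
elim/ltn_ind: m T => m IH T m0 cm aT.
have [->|m1] : m = 1%N \/ 1 < m by case: m m0 {IH cm} => // [[|k]] _; [left|right].
  have -> : [set x ^+ 1 | x in T] = T.
    apply/setP => x; apply/imsetP/idP => [[y yT ->]|xT]; first by rewrite expg1.
    by exists x; rewrite ?expg1.
  exact: aT.
set q := pdiv m.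
have pq : prime q by apply: pdiv_prime.
have qgt1 := prime_gt1 pq.
have qm : q %| m := pdiv_dvd m.
have -> : [set x ^+ m | x in T] = [set y ^+ q | y in [set x ^+ (m %/ q) | x in T]].
  rewrite -imset_comp; apply: eq_imset => x /=; by rewrite -expgnA divnK.
apply: powq_aset_gen => //; first exact: coprime_dvdr qm cm.
apply: IH.
- exact: ltn_Pdiv qgt1 m0.
- by rewrite divn_gt0 ?pdiv_gt0 // dvdn_leq.
- exact: coprime_dvdr (dvdn_div qm) cm.
- exact: aT.
Qed.


Lemma stab_transfer (K : {group gT}) m X : K \subset G -> X \subset G ->
  coprime #|G| m -> K \subset rad G X -> K \subset rad G [set x ^+ m | x in X].
Proof.
move=> KG XG cm KR; apply/subsetP => k kK.
set X' := [set x ^+ m | x in X].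
have X'G : X' \subset G.
  by apply/subsetP => y /imsetP [x xX ->]; rewrite groupX // (subsetP XG).
have [k0 k0K ->] : exists2 k0, k0 \in K & k = k0 ^+ m.
  have EK : [set y ^+ m | y in K] = K.
    apply/eqP; rewrite eqEcard (card_pow cm KG) leqnn andbT.
    by apply/subsetP => y /imsetP [x xK ->]; rewrite groupX.
  by move: kK; rewrite -{1}EK => /imsetP [k0 k0K ->]; exists k0.
have k0G := subsetP KG k0 k0K.
rewrite inE groupX //= (lrcoset X'G) ?groupX // andbb.
move: (subsetP KR k0 k0K); rewrite inE => /and3P [_ /eqP Ek0 _].
rewrite eqEcard card_rcoset leqnn andbT; apply/subsetP => y.
rewrite mem_rcoset => /imsetP [x xX Ex].
have -> : y = (x * k0) ^+ m.
  by rewrite expgMn; [rewrite -Ex mulgKV | exact: commG (subsetP XG x xX) k0G].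
apply/imsetP; exists (x * k0) => //.
by rewrite -Ek0 mem_rcoset mulgK.
Qed.

Variable p : nat.
Hypotheses (pp : prime p) (pG : p.-group G).

Lemma gen_sub h h' : h \in G -> <[h]> = <[h']> -> h != 1 ->
  exists2 m, (0 < m) && coprime #|G| m & pblock S h' \subset [set x ^+ m | x in pblock S h].
Proof.
move=> hG E h1.
have : h' \in <[h]> by rewrite E cycle_id.
case/cycleP => m Eh'.
have cm : coprime #[h] m by rewrite -generator_coprime -Eh' /generator E.
have : #[h] %| p ^ logn p #|G| by rewrite -card_pgroup // order_dvdG.
case/(dvdn_pfactor _ _ pp) => b leb Eb.
have b0 : 0 < b by case: b Eb {leb} => // Eb; move/eqP: Eb; rewrite order_eq1 (negbTE h1).
have cpm : coprime p m by rewrite Eb coprime_pexpl in cm.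
have cGm : coprime #|G| m by rewrite {1}(card_pgroup pG) coprime_pexpl // (leq_trans b0 leb).
have m0 : 0 < m by case: m cpm {Eh' cm cGm} => //; rewrite prime_coprime // dvdn0.
exists m; first by rewrite m0 cGm.
have aX := powm_aset m0 cGm (aset_basic (pblockS hG)).
apply: aset_pblock aX _; rewrite Eh'; apply/imsetP; exists h => //.
exact: mem_pblockS.
Qed.

Lemma gen_transfer (K : {group gT}) h h' : K \subset G -> h \in G -> h' \in G ->
  <[h]> = <[h']> -> K \subset rad G (pblock S h) -> K \subset rad G (pblock S h').
Proof.
move=> KG hG h'G E KR.
case: (boolP (h == 1)) => [/eqP h1|h1].
  have : <[h']> == 1 by rewrite -E h1 cycle1.
  by rewrite cycle_eq1 => /eqP h'1; rewrite h'1 -h1.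
have h'1 : h' != 1 by rewrite -cycle_eq1 -E cycle_eq1.
case: (gen_sub hG E h1) => m /andP [m0 cm] sub1.
case: (gen_sub h'G (esym E) h'1) => m' /andP [m'0 cm'] sub2.
have XG := basic_sub (pblockS hG); have X'G := basic_sub (pblockS h'G).
have Eq : pblock S h' = [set x ^+ m | x in pblock S h].
  apply/eqP; rewrite eqEcard sub1 (card_pow cm XG).
  by rewrite -(card_pow cm' X'G) subset_leq_card.
by rewrite Eq; apply: stab_transfer.
Qed.

End Basics.

Lemma pick_gen (gT : finGroupType) (H : {group gT}) : cyclic H ->
  odflt 1 [pick x in H | generator H x] \in H /\
  <[odflt 1 [pick x in H | generator H x]]> = H.
Proof.
move=> cH; case: pickP => [x /andP [xH /eqP E] | none] /=; first by split.
case/cyclicP: cH => x Hx; have := none x; by rewrite /generator Hx cycle_id eqxx.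
Qed.

Unset Implicit Arguments.

Theorem lemma5p2 (gT : finGroupType) (p : nat) (G : {group gT})
  (S : {set {set gT}}) :
  prime p -> p.-group G -> cyclic G -> is_sring G S ->
  sring_rad G S != 1 ->
  exists U L : {group gT},
    [/\ is_asection G S U L, is_proper_wreath G S U L &
        sring_rad U (restr_sring S U) = 1].
Proof.
move=> pp pG cG sS radG.
have abG := cyclic_abelian cG.
have aG : is_aset G S G.
  apply/asetP => //; split => // Y YS _ _ _; exact: (basic_sub sS YS).
rewrite /sring_rad in radG.
case: (pick_gen cG) => gG Eg.
set g := odflt 1 _ in gG Eg radG.
have G1 : G != 1 :> {set gT}.
  apply: contraNneq radG => G1; rewrite eqEsubset sub1set; apply/andP; split.
    by rewrite -G1; apply/subsetP => x; rewrite inE => /andP [].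
  by rewrite inE group1 rcoset1 lcoset1 !eqxx.
set L := (\bigcap_(H : {group gT} | (H \subset G) && is_aset G S H && (H != 1 :> {set gT})) H)%G.
have LG : L \subset G by apply: (bigcap_inf G); rewrite subxx aG G1.
have Lmin (H : {group gT}) : H \subset G -> is_aset G S H -> H != 1 :> {set gT} -> L \subset H.
  by move=> HG aH H1; apply: (bigcap_inf H); rewrite HG aH H1.
have aL : is_aset G S L.
  apply/asetP; split => // Y YS y yY yL; apply/bigcapsP => H /andP [/andP [HG aH] H1].
  have yH : y \in H by move/bigcapP: yL; apply; rewrite HG aH H1.
  by case/asetP: aH => _ HH; apply: HH YS y yY yH.
have [w wG ow] : {w | w \in G & #[w] = p}.
  by apply: Cauchy => //; case: (pgroup_pdiv pG G1).
have wL : w \in L.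
  apply/bigcapP => H /andP [/andP [HG aH] H1].
  have [h hH oh] : {h | h \in H & #[h] = p}.
    by apply: Cauchy => //; case: (pgroup_pdiv (pgroupS HG pG) H1).
  have : <[w]> == <[h]> :> {set gT}.
    rewrite (eq_subG_cyclic cG) ?cycle_subG ?wG ?(subsetP HG _ hH) //; apply/eqP; exact: (etrans ow (esym oh)).
  move/eqP => E; have : w \in <[h]> by rewrite -E cycle_id.
  by apply: subsetP; rewrite cycle_subG.
have w1 : w != 1 by rewrite -order_eq1 ow; apply: contraTneq (prime_gt1 pp) => ->.
have L1 : L != 1 :> {set gT} by apply/trivgPn; exists w.
have radgrp X : X \in S -> group_set (rad G X) := fun XS => rad_group abG (basic_sub sS XS).
have LR : L \subset rad G (pblock S g).
  have XS := pblockS sS gG.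
  apply: (Lmin (Group (radgrp _ XS))) => //=.
  - by apply/subsetP => x; rewrite inE => /andP [].
  - have := rad_aset sS abG XS. done.
have n1 : ~~ (L \subset rad G [set 1]).
  apply/negP => /subsetP /(_ w wL); rewrite inE => /and3P [_ /eqP E _].
  have : w \in [set 1] :* w by rewrite mem_rcoset mulgV set11.
  by rewrite E inE (negbTE w1).
set F := [set Y in S | ~~ (L \subset rad G Y)].
set T := cover F.
have FS : F \subset S by apply/subsetP => Y; rewrite inE => /andP [].
have TG : T \subset G.
  apply/subsetP => x /bigcupP [Y YF xY].
  exact: subsetP (basic_sub sS (subsetP FS Y YF)) x xY.
have aT : is_aset G S T.
  apply/asetP; split => // Y YS y yY /bigcupP [Z ZF yZ].
  have ZS := subsetP FS Z ZF.
  have -> : Y = Z by rewrite -(pblock_eq sS YS yY) (pblock_eq sS ZS yZ).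
  by apply/subsetP => x xZ; apply/bigcupP; exists Z.
have YF l : l \in L -> pblock S l \in F.
  move=> lL; have lG := subsetP LG l lL; have YS := pblockS sS lG.
  rewrite inE YS /=; apply/negP => LY.
  move: (subsetP LY _ (groupVr lL)); rewrite inE => /and3P [_ /eqP E _].
  have Y1 : 1 \in pblock S l by rewrite -E mem_rcoset mul1g invgK (mem_pblockS sS lG).
  have E1 := basic1 sS YS Y1.
  by rewrite E1 in LY; rewrite LY in n1.
have T1 : 1 \in T.
  apply/bigcupP; exists (pblock S 1); first by apply: YF; exact: group1.
  by have := mem_pblockS sS (group1 G).
have LT : L \subset T.
  apply/subsetP => l lL; apply/bigcupP; exists (pblock S l); first exact: YF.
  by have := mem_pblockS sS (subsetP LG l lL).
set U := <<T>>%G.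
have UG : U \subset G by rewrite gen_subG.
have aU : is_aset G S U := aset_gen sS aT T1.
have LU : L \subset U := subset_trans LT (sub_gen (subxx T)).
have U1 : U != 1 :> {set gT}.
  by apply/trivgPn; exists w => //; exact: subsetP LU w wL.
have cU := cyclicS UG cG.
have [t tT Et] : exists2 t, t \in T & <[t]> = U.
  case/cyclicP: cU => u0 Eu0.
  case: (boolP [exists t in T, <[t]> == U :> {set gT}]).
    by case/exists_inP => t tT /eqP E; exists t.
  rewrite negb_exists_in => /forall_inP nT; exfalso.
  case: (pgroup_pdiv (pgroupS UG pG) U1) => _ _ [a Ea].
  have oU : #[u0] = (p ^ a.+1)%N by rewrite orderE -Eu0.
  have TM : T \subset <[u0 ^+ p]>.
    apply/subsetP => t tT; have : t \in <[u0]> by rewrite -Eu0 mem_gen.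
    case/cycleP => k Ek.
    have : ~~ coprime #[u0] k.
      apply/negP => ck; have := nT t tT; rewrite Ek.
      have : generator <[u0]> (u0 ^+ k) by rewrite generator_coprime.
      by rewrite /generator => /eqP <-; rewrite Eu0 eqxx.
    rewrite oU coprime_pexpl // prime_coprime // negbK => pk.
    by rewrite Ek -(divnK pk) mulnC expgnA mem_cycle.
  have UM : U \subset <[u0 ^+ p]> by rewrite gen_subG.
  have := subset_leq_card UM; rewrite -orderE orderXgcd oU.
  rewrite (gcdn_idPr _) ?dvdn_exp // Ea leqNgt ltn_Pdiv ?prime_gt1 //.
  by rewrite expn_gt0 prime_gt0.
have XtF : pblock S t \in F.
  by case/bigcupP: tT => Z ZF tZ; rewrite (pblock_eq sS (subsetP FS Z ZF) tZ).
have nLt : ~~ (L \subset rad G (pblock S t)) by move: XtF; rewrite inE => /andP [].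
have tG : t \in G := subsetP TG t tT.
have UnG : U != G :> {set gT}.
  apply/negP => /eqP UG'.
  have E : <[g]> = <[t]> by rewrite Eg Et UG'.
  by rewrite (gen_transfer sS abG pp pG LG gG tG E LR) in nLt.
have radU : sring_rad U (restr_sring S U) = 1.
  rewrite /sring_rad; case: (pick_gen cU) => uU Eu.
  set u := odflt 1 _ in uU Eu *.
  have uG := subsetP UG u uU.
  have XuR : pblock S u \in restr_sring S U.
    by rewrite inE (pblockS sS uG) (aset_pblock sS aU uU).
  have -> : pblock (restr_sring S U) u = pblock S u.
    apply: def_pblock XuR (mem_pblockS sS uG).
    by apply: trivIsetS (sS_triv sS); apply/subsetP => X; rewrite inE => /andP [].
  have -> : rad U (pblock S u) = U :&: rad G (pblock S u).
    by apply/setP => x; rewrite !inE; case xU: (x \in U); rewrite //= (subsetP UG x xU).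
  apply/eqP; apply: contraTT nLt => R1; rewrite negbK.
  set Rg := Group (radgrp _ (pblockS sS uG)).
  have LR' : L \subset U :&: rad G (pblock S u).
    apply: (Lmin (setI_group U Rg)) => //=.
    - by rewrite subIset ?UG.
    - exact: asetI aU (rad_aset sS abG (pblockS sS uG)).
  have LRu : L \subset rad G (pblock S u) by apply: subset_trans LR' (subsetIr _ _).
  by apply: (gen_transfer sS abG pp pG LG uG tG _ LRu); rewrite Eu Et.
exists U, L; split.
- rewrite /is_asection /is_asubgroup UG aU LG aL /=.
  by rewrite -(@sub_abelian_normal _ _ _ (abelianS UG abG)) LU.
- rewrite /is_proper_wreath /is_wreath L1 UnG -(@sub_abelian_normal _ _ _ abG) LG /=.
  rewrite andbT; apply/forall_inP => X XS; apply/implyP => XU; apply: contraR XU => nL.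
  have XF : X \in F by rewrite inE XS nL.
  by apply/subsetP => x xX; apply: mem_gen; apply/bigcupP; exists X.
- exact: radU.
Qed.
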